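(* Let $G$ be a star with one central vertex $\mathsf{v}_1$ and $N\ge2$ semi-infinite edges, of which $\mathsf{e}_1,\dots,\mathsf{e}_L$ ($1\le L<N$) are incoming and identified with $(-\infty,0]$ and $\mathsf{e}_{L+1},\dots,\mathsf{e}_N$ are outgoing and identified with $[0,\infty)$, the central vertex corresponding to $0$ on every edge. Consider on $G$ the system $$\partial_tu_i-a_i\partial_x^2\partial_tu_i+b_iu_i\partial_xu_i=0\ \text{ on }\mathsf{e}_i,\ t>0,\qquad u_j(t,0)=u_k(t,0)\ \ (1\le j,k\le N,\ t\ge0),$$ $$\sum_{i=1}^L a_i\partial_xu_i(t,0)-\sum_{i=L+1}^N a_i\partial_xu_i(t,0)=0\quad (t\ge0),$$ i.e. (BBMG) with all $d_i=0$, where $a_i>0$ and $b_i\in\mathbb{R}\setminus\{0\}$. Assume $$\sqrt{\frac{a_i}{a_1}}=\frac{b_i}{b_1}>0\quad\text{for all }1\le i\le N,\qquad\text{and}\qquad \sum_{i=1}^Lb_i=\sum_{j=L+1}^Nb_j.$$ Then for every $c_1>0$, setting $c_i=\sqrt{a_i/a_1}\,c_1$ for $1\le i\le N$, there exist real constants $\tau_i$ such that the function $u$ given on each edge by $u_i(t,x)=\varphi_i(x-c_it+\tau_i)$, where $$\varphi_i(z)=\frac{6c_i}{b_i}\cdot\frac{1}{1+\cosh\big(z/\sqrt{a_i}\big)},\qquad z\in\mathbb{R},$$ is a strong solution of this system.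
   Context: A strong solution is a function $u$ which is continuous on the star for each $t$, with $u_i\in\mathcal{C}^{1,1}(\mathsf{e}_i\times[0,\infty))$ and $\partial_tu_i\in\mathcal{C}^{2,0}(\mathsf{e}_i\times[0,\infty))$ on each edge, and which satisfies the system pointwise. The profile $\varphi_i$ is the solitary wave $\frac{6(c-d)}{b}\big(1+\cosh(\sqrt{(c-d)/(ac)}\,z)\big)^{-1}$ with $a=a_i$, $b=b_i$, $c=c_i$, $d=0$. No conditions are imposed at infinity and no initial condition is imposed. *)

(* Defs.v *)
From Stdlib Require Import Reals Lra.
From Coquelicot Require Import Coquelicot.
Open Scope R_scope.

(* A function on the star graph: u i t x is the value on edge i (1 <= i <= N)
   at time t and position x. *)
Definition on_edge (L i : nat) (x : R) : Prop :=
  if (i <=? L)%nat then x <= 0 else 0 <= x.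

Definition in_dom (L i : nat) (t x : R) : Prop := 0 <= t /\ on_edge L i x.

Definition pt (f : R -> R -> R) : R -> R -> R :=
  fun t x => Derive (fun s => f s x) t.
Definition px (f : R -> R -> R) : R -> R -> R :=
  fun t x => Derive (fun y => f t y) x.

Definition cont_on_dom (L i : nat) (f : R -> R -> R) : Prop :=
  forall t x, in_dom L i t x ->
  forall eps, 0 < eps -> exists delta, 0 < delta /\
    forall s y, in_dom L i s y -> Rabs (s - t) < delta -> Rabs (y - x) < delta ->
      Rabs (f s y - f t x) < eps.

Definition C11 (L i : nat) (f : R -> R -> R) : Prop :=
  (forall t x, in_dom L i t x ->
     ex_derive (fun s => f s x) t /\ ex_derive (fun y => f t y) x) /\
  cont_on_dom L i f /\ cont_on_dom L i (pt f) /\ cont_on_dom L i (px f).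

Definition C20 (L i : nat) (f : R -> R -> R) : Prop :=
  (forall t x, in_dom L i t x ->
     ex_derive (fun y => f t y) x /\ ex_derive (fun y => px f t y) x) /\
  cont_on_dom L i f /\ cont_on_dom L i (px f) /\ cont_on_dom L i (px (px f)).

Definition strong_solution (N L : nat) (a b : nat -> R)
    (u : nat -> R -> R -> R) : Prop :=
  (forall i, (1 <= i <= N)%nat -> C11 L i (u i) /\ C20 L i (pt (u i))) /\
  (forall j k t, (1 <= j <= N)%nat -> (1 <= k <= N)%nat -> 0 <= t ->
     u j t 0 = u k t 0) /\
  (forall t, 0 <= t ->
     sum_n_m (fun i => a i * px (u i) t 0) 1 L
     - sum_n_m (fun i => a i * px (u i) t 0) (S L) N = 0) /\
  (forall i t x, (1 <= i <= N)%nat -> 0 < t -> on_edge L i x ->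
     pt (u i) t x - a i * px (px (pt (u i))) t x
       + b i * u i t x * px (u i) t x = 0).

Definition profile (a b c d : R) (z : R) : R :=
  6 * (c - d) / b * / (1 + cosh (sqrt ((c - d) / (a * c)) * z)).

(* Main.v *)
From Stdlib Require Import Reals Lra Lia FunctionalExtensionality.
From Coquelicot Require Import Coquelicot.

Require Import Defs.
Open Scope R_scope.
Definition H0 y := / (1 + cosh y).
Definition H1 y := - sinh y / (1 + cosh y)^2.
Definition H2 y := (cosh y - 2) / (1 + cosh y)^2.
Definition H3 y := sinh y * (5 - cosh y) / (1 + cosh y)^3.
Lemma cosh_pos1 y : 0 < 1 + cosh y.
Proof. unfold cosh. pose proof (exp_pos y); pose proof (exp_pos (-y)). lra. Qed.
Lemma D0 y : is_derive H0 y (H1 y).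
Proof.
  pose proof (cosh_pos1 y) as P. unfold H0, H1 in *. unfold cosh, sinh in *.
  pose proof (exp_pos y).
  auto_derive; rewrite ?exp_Ropp in *; [ repeat split; nra | field; repeat split; nra ].
Qed.
Lemma D1 y : is_derive H1 y (H2 y).
Proof.
  pose proof (cosh_pos1 y) as P. unfold H1, H2 in *. unfold cosh, sinh in *.
  pose proof (exp_pos y).
  auto_derive; rewrite ?exp_Ropp in *; [ repeat split; nra | field; repeat split; nra ].
Qed.
Lemma D2 y : is_derive H2 y (H3 y).
Proof.
  pose proof (cosh_pos1 y) as P. unfold H2, H3 in *. unfold cosh, sinh in *.
  pose proof (exp_pos y).
  auto_derive; rewrite ?exp_Ropp in *; [ repeat split; nra | field; repeat split; nra ].
Qed.

Section G.
Variables (G G' : R -> R) (HG : forall y, is_derive G y (G' y)).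

Lemma dx_gen B k c tau t x :
  is_derive (fun y => B * G (k*(y - c*t + tau))) x (B * k * G' (k*(x - c*t+tau))).
Proof.
  rewrite Rmult_assoc. apply is_derive_scal.
  apply (is_derive_comp G (fun y => k*(y - c*t + tau))). apply HG.
  auto_derive; auto; ring.
Qed.

Lemma dt_gen B k c tau t x :
  is_derive (fun s => B * G (k*(x - c*s + tau))) t (B * (- (k*c)) * G' (k*(x - c*t+tau))).
Proof.
  rewrite Rmult_assoc. apply is_derive_scal.
  apply (is_derive_comp G (fun s => k*(x - c*s + tau))). apply HG.
  auto_derive; auto; ring.
Qed.

Lemma px_gen B k c tau :
  px (fun t x => B * G (k*(x - c*t + tau))) = fun t x => B * k * G' (k*(x - c*t+tau)).
Proof.
  apply functional_extensionality; intro t; apply functional_extensionality; intro x.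
  unfold px; apply is_derive_unique, dx_gen.
Qed.

Lemma pt_gen B k c tau :
  pt (fun t x => B * G (k*(x - c*t + tau))) = fun t x => B * (- (k*c)) * G' (k*(x - c*t+tau)).
Proof.
  apply functional_extensionality; intro t; apply functional_extensionality; intro x.
  unfold pt; apply is_derive_unique, dt_gen.
Qed.

End G.
Lemma cont_gen (G : R -> R) (HG : forall y, @continuous R_UniformSpace R_UniformSpace G y) L i B k c tau : cont_on_dom L i (fun t x => B * G (k*(x - c*t + tau))).
Proof.
  intros t x _ eps Heps.
  set (w0 := k*(x - c*t + tau)).
  assert (HC := HG w0).
  pose proof (proj1 (filterlim_locally G (G w0)) HC) as HL.
  assert (He' : 0 < eps / (Rabs B + 1)).
  { apply Rdiv_lt_0_compat; auto. pose proof (Rabs_pos B); lra. }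
  destruct (HL (mkposreal _ He')) as [d Hd].
  assert (Hden : 0 < Rabs k * (1 + Rabs c) + 1).
  { pose proof (Rabs_pos k); pose proof (Rabs_pos c); nra. }
  exists (d / (Rabs k * (1 + Rabs c) + 1)). split.
  { apply Rdiv_lt_0_compat; auto. apply cond_pos. }
  intros s y _ Hs Hy.
  assert (Hw : Rabs (k*(y - c*s + tau) - w0) < d).
  { unfold w0.
    replace (k * (y - c * s + tau) - k * (x - c * t + tau)) with (k * ((y - x) - c * (s - t))) by ring.
    rewrite Rabs_mult.
    assert (Rabs ((y - x) - c*(s-t)) <= Rabs (y-x) + Rabs c * Rabs (s - t)).
    { unfold Rminus at 1. eapply Rle_trans. apply Rabs_triang. rewrite Rabs_Ropp, Rabs_mult. lra. }
    set (dd := d / (Rabs k * (1 + Rabs c) + 1)) in *.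
    assert (Hdd : dd * (Rabs k * (1 + Rabs c) + 1) = d) by (unfold dd; field; lra).
    pose proof (Rabs_pos k); pose proof (Rabs_pos c); pose proof (Rabs_pos (y-x)); pose proof (Rabs_pos (s-t)).
    pose proof (Rabs_pos ((y - x) - c*(s-t))).
    assert (Rabs ((y - x) - c*(s-t)) < dd * (1 + Rabs c)) by nra.
    nra. }
  specialize (Hd _ Hw). unfold ball in Hd; simpl in Hd; unfold AbsRing_ball, abs, minus, plus, opp in Hd; simpl in Hd.
  replace (B * G (k * (y - c * s + tau)) - B * G w0) with (B * (G (k * (y - c * s + tau)) - G w0)) by ring.
  rewrite Rabs_mult.
  pose proof (Rabs_pos B). pose proof (Rabs_pos (G (k * (y - c * s + tau)) - G w0)).
  assert (eps / (Rabs B + 1) * (Rabs B + 1) = eps) by (field; lra).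
  change (Rabs (G (k * (y - c * s + tau)) + - G w0) < eps / (Rabs B + 1)) in Hd.
  fold (G (k * (y - c * s + tau)) - G w0) in Hd.
  nra.
Qed.

Lemma contd (G G' : R -> R) (HG : forall y, is_derive G y (G' y)) y :
  @continuous R_UniformSpace R_UniformSpace G y.
Proof. apply (ex_derive_continuous (K:=R_AbsRing) (V:=R_NormedModule)); eexists; apply HG. Qed.

Lemma cont3 y : @continuous R_UniformSpace R_UniformSpace H3 y.
Proof.
  apply (ex_derive_continuous (K:=R_AbsRing) (V:=R_NormedModule)).
  pose proof (cosh_pos1 y) as P. unfold H3 in *. unfold cosh, sinh in *.
  pose proof (exp_pos y).
  auto_derive; rewrite ?exp_Ropp in *. assert (0 < (1 + (exp y + / exp y) * / 2)) by lra. repeat apply Rmult_integral_contrapositive_currified; lra.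
Qed.

Lemma key y : - H1 y + H3 y + 6 * H0 y * H1 y = 0.
Proof.
  pose proof (cosh_pos1 y). unfold H0, H1, H3. field. lra.
Qed.

Theorem theorem5p1 (N L : nat) (a b : nat -> R) (c1 : R) :
  (2 <= N)%nat -> (1 <= L)%nat -> (L < N)%nat ->
  (forall i, (1 <= i <= N)%nat -> 0 < a i) ->
  (forall i, (1 <= i <= N)%nat -> b i <> 0) ->
  (forall i, (1 <= i <= N)%nat -> sqrt (a i / a 1%nat) = b i / b 1%nat) ->
  (forall i, (1 <= i <= N)%nat -> 0 < b i / b 1%nat) ->
  sum_n_m b 1 L = sum_n_m b (S L) N ->
  0 < c1 ->
  let c := fun i : nat => sqrt (a i / a 1%nat) * c1 in
  exists tau : nat -> R,
    strong_solution N L a b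
      (fun i t x => profile (a i) (b i) (c i) 0 (x - c i * t + tau i)).
Proof.
  intros HN HL1 HLN Ha Hb Hsq Hpos Hsum Hc1 c.
  exists (fun _ => 0).
  assert (H1r : (1 <= 1 <= N)%nat) by lia.
  pose proof (Ha 1%nat H1r) as Ha1. pose proof (Hb 1%nat H1r) as Hb1.
  set (B := 6 * c1 / b 1%nat).
  assert (F : forall i, (1 <= i <= N)%nat ->
     0 < c i /\ c i = b i / b 1%nat * c1 /\ sqrt (/ a i) * c i = sqrt (/ a 1%nat) * c1 /\
     a i * sqrt (/ a i) = b i / b 1%nat * sqrt (a 1%nat) /\
     sqrt (/ a i) * sqrt (/ a i) = / a i /\
     (fun t x => profile (a i) (b i) (c i) 0 (x - c i * t + 0)) =
     (fun t x => B * H0 (sqrt (/ a i) * (x - c i * t + 0)))).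
  { intros i Hi. pose proof (Ha i Hi) as Hai. pose proof (Hb i Hi) as Hbi.
    assert (Hq : 0 < a i / a 1%nat) by (apply Rdiv_lt_0_compat; auto).
    assert (Hci : 0 < c i) by (unfold c; apply Rmult_lt_0_compat; auto; apply sqrt_lt_R0; auto).
    assert (Eci : c i = b i / b 1%nat * c1) by (unfold c; rewrite Hsq; auto).
    assert (E4 : sqrt (/ a i) * sqrt (/ a i) = / a i).
    { apply sqrt_sqrt. left. apply Rinv_0_lt_compat; auto. }
    split; [auto|]. split; [auto|]. split.
    { unfold c. rewrite <- Rmult_assoc, <- sqrt_mult.
      - replace (/ a i * (a i / a 1%nat)) with (/ a 1%nat) by (field; lra). auto.
      - left. apply Rinv_0_lt_compat; auto.
      - lra. }
    split.
    { rewrite sqrt_inv, <- Hsq by auto.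
      rewrite <- sqrt_mult by lra.
      replace (a i / a 1%nat * a 1%nat) with (a i) by (field; lra).
      pose proof (sqrt_sqrt (a i) (Rlt_le _ _ Hai)) as Ss.
      pose proof (sqrt_lt_R0 _ Hai).
      rewrite <- Ss at 1. field. lra. }
    split; [auto|].
    apply functional_extensionality; intro t; apply functional_extensionality; intro x.
    unfold profile, H0, B. f_equal.
    - rewrite Eci. field. lra.
    - f_equal. f_equal. f_equal. rewrite Rminus_0_r. f_equal. f_equal. field. lra. }
  unfold strong_solution. cbv beta.
  split; [|split; [|split]].
  - intros i Hi. destruct (F i Hi) as (_ & _ & _ & _ & _ & Ef). rewrite Ef.
    rewrite (pt_gen H0 H1 D0). split.
    + split; [|split; [|split]].
      * intros t x _. split; eexists; [apply (dt_gen H0 H1 D0) | apply (dx_gen H0 H1 D0)].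
      * apply cont_gen, (contd H0 H1 D0).
      * rewrite (pt_gen H0 H1 D0). apply cont_gen, (contd H1 H2 D1).
      * rewrite (px_gen H0 H1 D0). apply cont_gen, (contd H1 H2 D1).
    + split; [|split; [|split]].
      * intros t x _. rewrite (px_gen H1 H2 D1).
        split; eexists; [apply (dx_gen H1 H2 D1) | apply (dx_gen H2 H3 D2)].
      * apply cont_gen, (contd H1 H2 D1).
      * rewrite (px_gen H1 H2 D1). apply cont_gen, (contd H2 H3 D2).
      * rewrite (px_gen H1 H2 D1), (px_gen H2 H3 D2). apply cont_gen, cont3.
  - intros j k t Hj Hk _.
    destruct (F j Hj) as (_ & _ & Kj & _ & _ & Ej).
    destruct (F k Hk) as (_ & _ & Kk & _ & _ & Ek).
    pose proof (f_equal (fun f => f t 0) Ej) as Ej'; cbv beta in Ej'.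
    pose proof (f_equal (fun f => f t 0) Ek) as Ek'; cbv beta in Ek'.
    rewrite Ej', Ek'.
    replace (sqrt (/ a j) * (0 - c j * t + 0)) with (- (sqrt (/ a j) * c j) * t) by ring.
    replace (sqrt (/ a k) * (0 - c k * t + 0)) with (- (sqrt (/ a k) * c k) * t) by ring.
    rewrite Kj, Kk. reflexivity.
  - intros t _.
    set (K := B / b 1%nat * sqrt (a 1%nat) * H1 (- (sqrt (/ a 1%nat) * c1) * t)).
    rewrite (sum_n_m_ext_loc _ (fun i => b i * K) 1 L).
    2:{ intros i Hi. assert (Hi' : (1 <= i <= N)%nat) by lia.
        destruct (F i Hi') as (_ & _ & Ki & Ai & _ & Ei). rewrite Ei, (px_gen H0 H1 D0).
        replace (sqrt (/ a i) * (0 - c i * t + 0)) with (- (sqrt (/ a i) * c i) * t) by ring.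
        rewrite Ki. unfold K.
        match goal with |- ?x = ?y => change (@eq R x y) end. transitivity (B * (a i * sqrt (/ a i)) * H1 (- (sqrt (/ a 1%nat) * c1) * t)); [ring|].
        rewrite Ai. field. auto. }
    rewrite (sum_n_m_ext_loc _ (fun i => b i * K) (S L) N).
    2:{ intros i Hi. assert (Hi' : (1 <= i <= N)%nat) by lia.
        destruct (F i Hi') as (_ & _ & Ki & Ai & _ & Ei). rewrite Ei, (px_gen H0 H1 D0).
        replace (sqrt (/ a i) * (0 - c i * t + 0)) with (- (sqrt (/ a i) * c i) * t) by ring.
        rewrite Ki. unfold K.
        match goal with |- ?x = ?y => change (@eq R x y) end. transitivity (B * (a i * sqrt (/ a i)) * H1 (- (sqrt (/ a 1%nat) * c1) * t)); [ring|].
        rewrite Ai. field. auto. }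
    rewrite !(sum_n_m_mult_r (K:=R_Ring) K b). change mult with Rmult. simpl.
    assert (E : forall x y : R, x = y -> x * K - y * K = 0) by (intros; subst; ring). apply E. exact Hsum.
  - intros i t x Hi _ _.
    destruct (F i Hi) as (Hci & Eci & _ & _ & E4 & Ei).
    change (profile (a i) (b i) (c i) 0 (x - c i * t + 0)) with
      ((fun t x => profile (a i) (b i) (c i) 0 (x - c i * t + 0)) t x).
    rewrite Ei, (pt_gen H0 H1 D0), (px_gen H0 H1 D0), (px_gen H1 H2 D1), (px_gen H2 H3 D2).
    set (k := sqrt (/ a i)) in *.
    set (w := k * (x - c i * t + 0)).
    pose proof (key w) as Kw.
    pose proof (Ha i Hi). pose proof (Hb i Hi).
    assert (Hak : a i * (k * k) = 1) by (rewrite E4; field; lra).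
    assert (HbB : b i * B = 6 * c i) by (unfold B; rewrite Eci; field; auto).
    transitivity (B * k * (- c i * H1 w + c i * (a i * (k * k)) * H3 w + (b i * B) * H0 w * H1 w)); [ring|].
    rewrite Hak, HbB.
    replace (H3 w) with (H1 w - 6 * H0 w * H1 w) by lra. ring.
Qed.
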